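(* Let $O=(Y,D,Z)$ with $Y,D\in\mathbb{R}$ and $Z=(Z_1,\dots,Z_p)\in\{0,1\}^p$ (row vector), $p\ge2$, $\mu^*=\mathbb{E}(Z)$. Assume: (ALICE model) There are potential outcomes $Y(d,z)$ with $Y=Y(D,Z)$ and parameters $\beta^*\in\mathbb{R}$, $\zeta^*,\psi^*\in\mathbb{R}^p$ such that $Y(d',z')-Y(d,z)=(d'-d)\beta^*+(z'-z)\zeta^*$ for all $d,d',z,z'$ and $\mathbb{E}\{Y(0,0)\mid Z\}=Z\psi^*$; write $\pi^*=\zeta^*+\psi^*$, so that $\mathbb{E}(Y-D\beta^*\mid Z)=Z\pi^*$. (Independent instruments) $Z_1,\dots,Z_p$ are mutually independent. (Interaction relevance) For fixed $2\le q\le p$ and $r=\sum_{k=2}^q\binom pk$ (held fixed, not growing with sample size), $M=-\mathbb{E}\{(\bar Z_{2,\mu^*}^\top,\dots,\bar Z_{q,\mu^*}^\top)^\top D\}\in\mathbb{R}^r$ is nonzero. Let $\bar m(O;\beta^*,\mu^*,\pi^* )=(\bar Z_{2,\mu^*}^\top,\dots,\bar Z_{q,\mu^*}^\top)^\top(Y-D\beta^*-Z\pi^* )$ and $\Omega=\mathbb{E}\{\bar m(O;\beta^*,\mu^*,\pi^* )\bar m(O;\beta^*,\mu^*,\pi^* )^\top\}$, assumed nonsingular. Consider the semiparametric model for $O$ defined by these assumptions (equivalently, by the moment restriction $\mathbb{E}\{(\bar Z_{2,\mu^*}^\top,\dots,\bar Z_{q,\mu^*}^\top)^\top(Y-D\beta)\}=0$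 identifying $\beta^*$), in which influence functions of regular asymptotically linear estimators of $\beta^*$ have the form $(\theta^\top M)^{-1}\theta^\top \bar m(O;\beta^*,\mu^*,\pi^* )$ for $\theta\in\mathbb{R}^r$ with $\theta^\top M\neq0$. Then the efficient influence function for $\beta^*$ is the one with $\theta=\theta_{\mathrm{opt}}=\Omega^{-1}M$, i.e. $(M^\top\Omega^{-1}M)^{-1}M^\top\Omega^{-1}\bar m(O;\beta^*,\mu^*,\pi^* )$, and the semiparametric efficiency bound for $\beta^*$ is $(M^\top\Omega^{-1}M)^{-1}$.
   Context: For $1\le k\le p$ and $\mu\in\mathbb{R}^p$, $\bar Z_{k,\mu}$ is the column vector (in a fixed order) of all demeaned $k$-th order interactions $\prod_{j\in x}(Z_j-\mu_j)$ over subsets $x\subseteq\{1,\dots,p\}$ with $|x|=k$. All expectations appearing are assumed finite. *)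

(* Defs.v *)
From HB Require Import structures.
From mathcomp Require Import all_boot all_order all_algebra.
From mathcomp Require Import all_classical all_reals all_analysis.
Set Implicit Arguments. Unset Strict Implicit. Unset Printing Implicit Defensive.
Import Order.TTheory GRing.Theory Num.Theory.
Local Open Scope classical_set_scope.
Local Open Scope ring_scope.

(* The vectors \bar Z_{k,mu}, k=2..q, stacked, are
   indexed by this finite type (in the fixed order given by [enum]). *)
Definition Ix (p q : nat) := {x : {set 'I_p} | (2 <= #|x| <= q)%N}.

Definition rdim (p q : nat) : nat := #|{: Ix p q}|.

Definition idx (p q : nat) (i : 'I_(rdim p q)) : {set 'I_p} :=
  val (enum_val (A := {: Ix p q}) i).

Section Defs.
Context (R : realType) (d : measure_display) (T : measurableType d).

Definition Ex (P : probability T R) (f : T -> R) : R := Rintegral P setT f.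

Definition binary (p : nat) (z : 'I_p -> R) : Prop :=
  forall j, z j = 0 \/ z j = 1.

Definition mutually_independent (P : probability T R) (p : nat)
    (Z : T -> 'I_p -> R) : Prop :=
  forall (S : {set 'I_p}) (A : 'I_p -> set R),
    (forall j, measurable (A j)) ->
    P (\big[setI/setT]_(j in S) ((fun w => Z w j) @^-1` A j))
    = (\prod_(j in S) P ((fun w => Z w j) @^-1` A j))%E.

Definition zbar (p : nat) (Z : T -> 'I_p -> R) (mu : 'I_p -> R)
    (x : {set 'I_p}) (w : T) : R :=
  \prod_(j in x) (Z w j - mu j).

Definition mbar (p q : nat) (Y D : T -> R) (Z : T -> 'I_p -> R)
    (beta : R) (mu pi : 'I_p -> R) (w : T) : 'cV[R]_(rdim p q) :=
  \col_i (zbar Z mu (idx i) w * (Y w - D w * beta - \sum_j Z w j * pi j)).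

End Defs.

(* Main.v *)
Require Import Defs.
From HB Require Import structures.
From mathcomp Require Import all_boot all_order all_algebra.
From mathcomp Require Import all_classical all_reals all_analysis.
From mathcomp Require Import measurable_realfun.
From mathcomp Require Import ring lra.
Import Order.TTheory GRing.Theory Num.Theory.
Local Open Scope classical_set_scope.
Local Open Scope ring_scope.
Section S.
Context (R : realType) (d : measure_display) (T : measurableType d) (P : probability T R).

Notation Ex' := (Ex P).

Lemma int_sumR (I : Type) (s : seq I) (f : I -> T -> R) :
  (forall i, P.-integrable setT (EFin \o f i)) ->
  P.-integrable setT (EFin \o (fun w => \sum_(i <- s) f i w)).
Proof.
move=> hf; elim: s => [|i s ih].
  apply: (eq_integrable _ (cst 0%E)) => //; last exact: integrable0.
  by move=> x _ /=; rewrite big_nil.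
apply: (eq_integrable _ ((EFin \o f i) \+ (EFin \o (fun w => \sum_(i <- s) f i w)))) => //.
  by move=> x _ /=; rewrite big_cons.
exact: integrableD.
Qed.

Lemma Ex_sum (I : Type) (s : seq I) (f : I -> T -> R) :
  (forall i, P.-integrable setT (EFin \o f i)) ->
  Ex' (fun w => \sum_(i <- s) f i w) = \sum_(i <- s) Ex' (f i).
Proof.
move=> hf; elim: s => [|i s ih].
  rewrite big_nil /Ex'; under eq_Rintegral do rewrite big_nil.
  by rewrite Rintegral_cst // mul0r.
rewrite big_cons /Ex'; under eq_Rintegral do rewrite big_cons.
rewrite RintegralD //.
  by rewrite -ih.
exact: int_sumR.
Qed.

Lemma ExZ c f : P.-integrable setT (EFin \o f) -> Ex' (fun w => c * f w) = c * Ex' f.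
Proof. by move=> hf; rewrite /Ex' RintegralZl. Qed.

Lemma int_scale c f : P.-integrable setT (EFin \o f) -> P.-integrable setT (EFin \o (fun w => c * f w)).
Proof.
move=> hf; apply: (eq_integrable _ (fun x => (c%:E * (EFin \o f) x)%E)) => //.
exact: integrableZl.
Qed.

Lemma quad_Ex n (mb : T -> 'cV[R]_n) (th : 'cV[R]_n) :
  (forall i k, P.-integrable setT (EFin \o (fun w => mb w i 0 * mb w k 0))) ->
  P.-integrable setT (EFin \o (fun w => ((th^T *m mb w) 0 0) ^+ 2)) /\
  Ex' (fun w => ((th^T *m mb w) 0 0) ^+ 2) =
  (th^T *m (\matrix_(i, k) Ex' (fun w => mb w i 0 * mb w k 0)) *m th) 0 0.
Proof.
move=> hint.
have E : (fun w => ((th^T *m mb w) 0 0) ^+ 2) = (fun w =>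
   \sum_(k < n) \sum_(i < n) (th i 0 * th k 0) * (mb w i 0 * mb w k 0)).
  apply/funext => w; rewrite !mxE expr2 big_distrr; apply: eq_bigr => k _.
  rewrite big_distrl; apply: eq_bigr => i _ /=; rewrite !mxE.
  by rewrite mulrACA.
have hi : forall k, P.-integrable setT (EFin \o (fun w =>
      \sum_(i < n) (th i 0 * th k 0) * (mb w i 0 * mb w k 0))).
  move=> k; apply: int_sumR => i; exact: int_scale.
rewrite E; split; first exact: int_sumR.
rewrite Ex_sum // mxE; apply: eq_bigr => k _.
rewrite Ex_sum; last by move=> i; exact: int_scale.
rewrite mxE big_distrl; apply: eq_bigr => i _.
by rewrite ExZ // !mxE mulrAC.
Qed.
End S.
Arguments quad_Ex {R d T} P {n mb} th _.

Section Alg.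
Context (R : realFieldType) (n : nat) (S : 'M[R]_n).
Definition B (u v : 'cV[R]_n) := (u^T *m S *m v) 0 0.



Lemma B_sym : S^T = S -> forall u v, B u v = B v u.
Proof.
move=> SS u v; rewrite /B.
have -> : (v^T *m S *m u) = (u^T *m S *m v)^T by rewrite !trmx_mul trmxK SS mulmxA.
by rewrite [RHS]mxE.
Qed.

Lemma B_exp (a c : R) u v : S^T = S ->
  B (a *: u + c *: v) (a *: u + c *: v) = a^+2 * B u u + 2 * a * c * B u v + c^+2 * B v v.
Proof.
move=> SS; have := B_sym SS v u; rewrite /B => Hs.
have -> : (a *: u + c *: v)^T = a *: u^T + c *: v^T by apply/matrixP => i j; rewrite !mxE.
rewrite !mulmxDl !mulmxDr -!scalemxAl -!scalemxAr.
rewrite !mxE in Hs *; rewrite Hs; ring.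
Qed.
End Alg.
Arguments B {R n} S u v.
Arguments B_exp {R n S} a c u v _.
Section Alg2.
Context (R : realFieldType) (n : nat) (S : 'M[R]_n).
Lemma alg (M : 'cV[R]_n) : S^T = S -> S \in unitmx -> M != 0 ->
  (forall th, 0 <= B S th th) ->
  [/\ (invmx S *m M)^T = M^T *m invmx S,
      B S (invmx S *m M) (invmx S *m M) = (M^T *m invmx S *m M) 0 0,
      0 < (M^T *m invmx S *m M) 0 0 &
    forall th, (th^T *m M) 0 0 != 0 ->
      ((M^T *m invmx S *m M) 0 0)^-1 <= B S th th / ((th^T *m M) 0 0)^+2].
Proof.
move=> SS Su M0 psd.
set x := invmx S *m M; set b : R := (M^T *m invmx S *m M) 0 0.
have xT : x^T = M^T *m invmx S by rewrite trmx_mul trmx_inv SS.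
have Sx : S *m x = M by rewrite /x mulmxA mulmxV // mul1mx.
have Bx : forall v, B S x v = (M^T *m v) 0 0.
  by move=> v; rewrite /B xT -(mulmxA M^T) mulVmx // mulmx1.
have Bxx : B S x x = b by rewrite Bx /x mulmxA.
have Bthx : forall th, B S th x = (th^T *m M) 0 0.
  by move=> th; rewrite /B -mulmxA Sx.
have b0 : 0 <= b by rewrite -Bxx.
have bpos : 0 < b.
  rewrite lt_def b0 andbT; apply/negP => /eqP bz.
  set s : R := (M^T *m M) 0 0.
  have spos : 0 < s.
    rewrite /s mxE lt_def sumr_ge0 ?andbT; last first.
      by move=> i _; rewrite mxE -expr2 sqr_ge0.
    apply/negP; rewrite psumr_eq0; last by move=> i _; rewrite mxE -expr2 sqr_ge0.
    move=> /allP H; move/negP: M0; apply; apply/eqP/matrixP => i j.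
    have := H i (mem_index_enum _); rewrite /= mxE mulf_eq0 orbb => /eqP.
    by rewrite (ord1 j) mxE.
  set q : R := B S M M.
  have q0 : 0 <= q by exact: psd.
  set t : R := - s / (q + 1).
  have ht : t * (q + 1) = - s.
    by rewrite /t mulrVK // unitfE; apply: lt0r_neq0; rewrite ltr_wpDl //.
  have := psd (1 *: x + t *: M).
  rewrite B_exp // Bxx bz Bx -/s -/q expr1n => H.
  have tn : t < 0 by nra.
  have ts : t * s < 0 by nra.
  have e : t^+2 * q = t * (t * (q + 1)) - t^+2 by ring.
  rewrite ht mulrN in e.
  have := sqr_ge0 t.
  lra.
split => // th c0.
set c : R := (th^T *m M) 0 0.
have := psd (c^-1 *: th + (- b^-1) *: x).
rewrite B_exp // Bthx -/c Bxx.
have bn0 : b != 0 by rewrite gt_eqF.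
move=> H.
have -> : B S th th / c ^+ 2 = c^-1 ^+ 2 * B S th th + 2 * c^-1 * - b^-1 * c + (- b^-1) ^+ 2 * b + b^-1.
  by field; apply/andP.
lra.
Qed.
End Alg2.
Arguments alg {R n S M}.

Theorem theorem2 (R : realType) (d : measure_display) (T : measurableType d)
  (P : probability T R) (p q : nat)
  (Y D : T -> R) (Z : T -> 'I_p -> R)
  (Yp : R -> ('I_p -> R) -> T -> R)
  (beta : R) (zeta psi : 'I_p -> R) :
  (2 <= p)%N -> (2 <= q)%N -> (q <= p)%N ->
  (* observed data: measurability / finite expectations *)
  measurable_fun setT Y -> measurable_fun setT D ->
  (forall j, measurable_fun setT (fun w => Z w j)) ->
  (forall w, binary (Z w)) ->
  P.-integrable setT (EFin \o Y) -> P.-integrable setT (EFin \o D) ->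
  P.-integrable setT (EFin \o Yp 0 (fun _ => 0)) ->
  P.-integrable setT (EFin \o (fun w =>
     (Y w - D w * beta - \sum_j Z w j * (zeta j + psi j)) ^+ 2)) ->
  (* ALICE model *)
  (forall w, Y w = Yp (D w) (Z w) w) ->
  (forall (d0 d1 : R) (z0 z1 : 'I_p -> R), binary z0 -> binary z1 ->
     forall w, Yp d1 z1 w - Yp d0 z0 w
               = (d1 - d0) * beta + \sum_j (z1 j - z0 j) * zeta j) ->
  (* E{Y(0,0) | Z} = Z psi  (Z is discrete, stated cell by cell) *)
  (forall z : 'I_p -> R, binary z ->
     Rintegral P [set w | Z w = z] (Yp 0 (fun _ => 0))
     = (\sum_j z j * psi j) * fine (P [set w | Z w = z])) ->
  (* independent instruments *)
  mutually_independent P Z ->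
  let mu := fun j => Ex P (fun w => Z w j) in
  let pi := fun j => zeta j + psi j in
  let M : 'cV[R]_(rdim p q) :=
    \col_i (- Ex P (fun w => zbar Z mu (idx i) w * D w)) in
  let mb := mbar q Y D Z beta mu pi in
  let Omega : 'M[R]_(rdim p q) :=
    \matrix_(i, k) Ex P (fun w => mb w i 0 * mb w k 0) in
  (* interaction relevance; nonsingularity of Omega *)
  M != 0 ->
  Omega \in unitmx ->
  let IF := fun (theta : 'cV[R]_(rdim p q)) (w : T) =>
    (theta^T *m mb w) 0 0 / (theta^T *m M) 0 0 in
  let theta_opt := invmx Omega *m M in
  let bound := ((M^T *m invmx Omega *m M) 0 0)^-1 in
  [/\ (theta_opt^T *m M) 0 0 != 0,
      (forall w, IF theta_opt w
                 = bound * (M^T *m invmx Omega *m mb w) 0 0),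
      (forall theta : 'cV[R]_(rdim p q), (theta^T *m M) 0 0 != 0 ->
         Ex P (fun w => IF theta_opt w ^+ 2) <= Ex P (fun w => IF theta w ^+ 2))
    & Ex P (fun w => IF theta_opt w ^+ 2) = bound].
Proof.
move=> hp hq hqp mY mD mZ bin iY iD iY0 ir2 hY hmod hpsi hind mu pi M mb Omega
  M0 Ou IF th_opt bound.
set r := fun w => Y w - D w * beta - \sum_j Z w j * (zeta j + psi j).
have mbE : forall w i, mb w i 0 = zbar Z mu (idx i) w * r w.
  by move=> w i; rewrite /mb /mbar mxE.
have mzbar : forall S0 : {set 'I_p}, measurable_fun setT (zbar Z mu S0).
  move=> S0.
  have -> : zbar Z mu S0 = (fun w => \prod_(j <- index_enum 'I_p)
      (if j \in S0 then Z w j - mu j else 1)).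
    by apply/funext => w; rewrite /zbar big_mkcond.
  apply: measurable_prod => j _; case: (j \in S0) => //.
  by apply: measurable_funB => //; exact: measurable_cst.
have bzbar : forall (S0 : {set 'I_p}) w,
    `|zbar Z mu S0 w| <= \prod_(j in S0) (1 + `|mu j|).
  move=> S0 w; rewrite /zbar normr_prod; apply: ler_prod => j _.
  rewrite normr_ge0 /=; apply: (le_trans (ler_normB _ _)); rewrite lerD2r.
  by case: (bin w j) => ->; rewrite ?normr0 ?normr1.
have hint : forall i k,
    P.-integrable setT (EFin \o (fun w => mb w i 0 * mb w k 0)).
  move=> i k.
  have h1 := @integrableMr _ _ _ P setT measurableT
    (fun w => zbar Z mu (idx i) w * zbar Z mu (idx k) w) _
    (measurable_funM (mzbar _) (mzbar _)) _ ir2.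
  apply: (eq_integrable _ _ _ _ (h1 _)) => //.
    by move=> w _ /=; rewrite !mbE -EFinM; congr EFin; rewrite /r; ring.
  exists ((\prod_(j in idx i) (1 + `|mu j|)) * \prod_(j in idx k) (1 + `|mu j|)).
  split; first exact: num_real.
  move=> Mb hM w _ /=; apply: (le_trans _ (ltW hM)).
  by rewrite normrM ler_pM.
have OT : Omega^T = Omega.
  apply/matrixP => i k; rewrite !mxE; congr Ex; apply/funext => w.
  exact: mulrC.
have psd : forall th, 0 <= B Omega th th.
  move=> th; rewrite /B -(quad_Ex P th hint).2.
  by apply: Rintegral_ge0 => w _; exact: sqr_ge0.
have EIF : forall th, Ex P (fun w => IF th w ^+ 2)
    = B Omega th th / ((th^T *m M) 0 0)^+2.
  move=> th; have [h1 h2] := quad_Ex P th hint.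
  rewrite /IF /Ex; under eq_Rintegral do rewrite expr_div_n mulrC.
  by rewrite RintegralZl // -/(Ex P _) h2 mulrC.
have [xT Bxx bpos ineq] := alg OT Ou M0 psd.
have thM : (th_opt^T *m M) 0 0 = (M^T *m invmx Omega *m M) 0 0.
  by rewrite /th_opt xT.
split.
- by rewrite thM gt_eqF.
- move=> w; rewrite /IF thM /bound /th_opt xT mulrC.
  by [].
- move=> th c0; rewrite !EIF thM Bxx.
  by rewrite expr2 invrM ?unitfE ?gt_eqF // mulrA mulfV ?gt_eqF // mul1r; exact: ineq.
- rewrite EIF thM Bxx /bound.
  by rewrite expr2 invrM ?unitfE ?gt_eqF // mulrA mulfV ?gt_eqF // mul1r.
Qed.
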